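(* Consider the 9-puzzle: the $3\times 3$ grid graph with 9 distinct robots, one occupying each vertex. Then any two states of the 9-puzzle are connected via legal moves, i.e., from any assignment of the 9 robots to the 9 vertices one can reach any other such assignment by a finite sequence of legal moves.
   Context: A state is a bijection between the set of robots and the vertex set of the grid. A legal move (one time step) takes a state to another state such that each robot either stays at its vertex or moves to an adjacent vertex, no two robots end at the same vertex, and no two robots traverse the same edge in opposite directions (swap). Several robots may move simultaneously; since every vertex is occupied, the moving robots move synchronously along one or more vertex-disjoint cycles of the grid. *)

(* Defs.v *)
From mathcomp Require Import all_boot.
From Stdlib Require Import Relations.
Set Implicit Arguments. Unset Strict Implicit. Unset Printing Implicit Defensive.

Definition vertex := ('I_3 * 'I_3)%type.

Definition adjacent (u v : vertex) : bool :=
  ((u.1 == v.1) && ((u.2.+1 == v.2 :> nat) || (v.2.+1 == u.2 :> nat)))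
  || ((u.2 == v.2) && ((u.1.+1 == v.1 :> nat) || (v.1.+1 == u.1 :> nat))).

Definition robot := 'I_9.

Definition is_state (s : robot -> vertex) : Prop := bijective s.

Definition legal_move (s t : robot -> vertex) : Prop :=
  is_state s /\ is_state t /\
  (forall r : robot, t r = s r \/ adjacent (s r) (t r)) /\
  (forall r1 r2 : robot, r1 <> r2 -> ~ (t r1 = s r2 /\ t r2 = s r1)).

Definition reachable : relation (robot -> vertex) := clos_refl_trans (robot -> vertex) legal_move.

(* Main.v *)
Require Import Defs.
From mathcomp Require Import all_boot all_fingroup.
From Stdlib Require Import Relations FunctionalExtensionality.
Set Implicit Arguments. Unset Strict Implicit. Unset Printing Implicit Defensive.

Definition P (f : vertex -> vertex) : Prop :=
  forall s, is_state s -> reachable s (fun r => f (s r)).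

Lemma P_id : P id.
Proof. move=> s _; exact: rt_refl. Qed.

Lemma reach_state s t : reachable s t -> is_state s -> is_state t.
Proof. elim=> // [x y [_ [H _]]|x y z _ H1 _ H2] *; auto. Qed.

Lemma P_comp f g : P f -> P g -> P (fun v => g (f v)).
Proof.
move=> Pf Pg s ss; apply: rt_trans (Pf s ss) _.
apply: (Pg (fun r => f (s r))); exact: reach_state (Pf s ss) ss.
Qed.

Lemma P_ext f g : f =1 g -> P f -> P g.
Proof.
move=> fg Pf s ss.
have -> : (fun r => g (s r)) = (fun r => f (s r)).
  by apply: functional_extensionality => r; rewrite fg.
exact: Pf.
Qed.

Definition three_pos : 0 < 3 := isT.
Definition code (v : vertex) : nat := 3 * v.1 + v.2.
Definition dec (n : nat) : vertex :=
  (Ordinal (ltn_pmod (n %/ 3) three_pos), Ordinal (ltn_pmod n three_pos)).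

Lemma dec_code v : dec (code v) = v.
Proof.
case: v => [[[|[|[|i]]] Hi] [[|[|[|j]]] Hj]] //; apply/eqP; by vm_compute.
Qed.

Lemma code_lt v : code v < 9.
Proof. case: v => [[[|[|[|i]]] Hi] [[|[|[|j]]] Hj]] //. Qed.

Definition allv (p : vertex -> bool) := all (fun n => p (dec n)) (iota 0 9).

Lemma forall_dec (p : vertex -> bool) : allv p -> forall v, p v.
Proof.
move/allP=> H v; rewrite -(dec_code v); apply: H; rewrite mem_iota; exact: code_lt.
Qed.

Definition mv (l : seq nat) (v : vertex) : vertex := dec (nth 0 l (code v)).

Definition check (f : vertex -> vertex) : bool :=
  [&& allv (fun v => (f v == v) || adjacent v (f v)),
      allv (fun u => allv (fun v => (f u == f v) ==> (u == v))) &
      allv (fun u => allv (fun v => (u != v) ==> ~~ ((f u == v) && (f v == u))))].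

Lemma check_P f : check f -> P f.
Proof.
case/and3P => /forall_dec Hadj Hi /forall_dec Hsw s ss.
have Hinj : injective f.
  move=> u v e; have := forall_dec (forall_dec Hi u) v.
  by rewrite e eqxx /= => /eqP.
apply: rt_step; split; first exact: ss.
split.
  case: ss => si si1 si2.
  have fb : bijective f by apply: injF_bij.
  case: fb => fi fi1 fi2.
  exists (fun v => si (fi v)) => r /=; first by rewrite fi1 si1.
  by rewrite si2 fi2.
split.
  move=> r; case/orP: (Hadj (s r)) => [/eqP ->|]; [by left|by right].
move=> r1 r2 ne [e1 e2].
have sne : s r1 != s r2.
  apply/eqP => e; apply: ne; case: ss => si si1 _.
  by rewrite -(si1 r1) e si1.
have := Hsw (s r1); move/forall_dec/(_ (s r2)).
by rewrite sne /= e1 e2 !eqxx.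
Qed.

Fixpoint wordfun (w : seq (seq nat)) : vertex -> vertex :=
  match w with
  | [::] => id
  | l :: w' => fun v => wordfun w' (mv l v)
  end.

Lemma word_P w : all (fun l => check (mv l)) w -> P (wordfun w).
Proof.
elim: w => [|l w IH] /=; first by move=> _; exact: P_id.
case/andP => cl cw.
exact: (P_comp (check_P cl) (IH cw)).
Qed.

Definition tp (x y : vertex) (z : vertex) : vertex :=
  if z == x then y else if z == y then x else z.

Definition c : vertex := dec 4.

Definition words : seq (nat * seq (seq nat)) :=
 [:: (0, [:: [::0; 1; 2; 6; 3; 5; 7; 4; 8]; [::1; 2; 5; 0; 4; 8; 3; 6; 7]; [::0; 4; 1; 3; 7; 2; 6; 8; 5]]);
 (1, [:: [::0; 4; 1; 3; 7; 2; 6; 8; 5]; [::0; 1; 2; 3; 5; 8; 6; 4; 7]; [::0; 2; 5; 3; 1; 4; 6; 7; 8]]);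
 (2, [:: [::0; 1; 2; 3; 5; 8; 6; 4; 7]; [::3; 0; 1; 6; 4; 2; 7; 8; 5]; [::1; 4; 2; 0; 7; 5; 3; 6; 8]]);
 (3, [:: [::0; 1; 2; 6; 3; 5; 7; 4; 8]; [::1; 4; 2; 0; 7; 5; 3; 6; 8]; [::3; 0; 2; 4; 1; 5; 6; 7; 8]]);
 (5, [:: [::0; 1; 2; 3; 7; 4; 6; 8; 5]; [::0; 1; 2; 6; 3; 5; 7; 4; 8]; [::0; 1; 2; 4; 5; 8; 3; 6; 7]]);
 (6, [:: [::0; 1; 2; 3; 7; 4; 6; 8; 5]; [::1; 4; 2; 0; 5; 8; 3; 6; 7]; [::3; 0; 2; 4; 1; 5; 6; 7; 8]]);
 (7, [:: [::0; 1; 2; 3; 7; 4; 6; 8; 5]; [::0; 1; 2; 4; 5; 8; 3; 6; 7]; [::0; 1; 2; 6; 3; 5; 7; 4; 8]]);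
 (8, [:: [::0; 1; 2; 4; 7; 5; 3; 6; 8]; [::0; 4; 1; 6; 3; 2; 7; 8; 5]; [::0; 2; 5; 3; 1; 4; 6; 7; 8]])].

Definition words_ok : bool :=
  all (fun p => all (fun l => check (mv l)) p.2 &&
       allv (fun u => wordfun p.2 u == tp c (dec p.1) u)) words.

Lemma words_okT : words_ok.
Proof. by vm_compute. Qed.

Lemma P_words p : p \in words -> P (tp c (dec p.1)).
Proof.
move=> pin; have := allP words_okT p pin => /andP [cw /forall_dec e].
apply: P_ext (word_P cw) => u; exact/eqP.
Qed.

Lemma P_words' n : n \in map fst words -> P (tp c (dec n)).
Proof. by case/mapP=> p pin ->; exact: P_words. Qed.

Lemma P_hub v : P (tp c v).
Proof.
rewrite -(dec_code v); have := code_lt v.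
case: (code v) => [|[|[|[|[|[|[|[|[|n]]]]]]]]] // _;
  try (apply: P_words'; by vm_compute).
apply: P_ext P_id => u; rewrite /tp; by case: eqP => [->|_] //; case: eqP => [->|_].
Qed.

Lemma tpE (x y z : vertex) : tperm x y z = tp x y z.
Proof.
rewrite /tp; case: tpermP => [->|->|/eqP n1 /eqP n2]; rewrite ?eqxx //.
  by case: eqP => // ->.
by rewrite (negbTE n1) (negbTE n2).
Qed.

Definition F (x y : vertex) : vertex -> vertex :=
  if x == y then id else if y == c then tp c x
  else fun z => tp c x (tp c y (tp c x z)).

Lemma F_ok : allv (fun x => allv (fun y => allv (fun z => tp x y z == F x y z))).
Proof. by vm_compute. Qed.

Lemma P_tperm (x y : vertex) : P (tperm x y).
Proof.
apply: (@P_ext (F x y)).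
  move=> z; rewrite tpE; apply/eqP.
  by rewrite eq_sym; exact: (forall_dec (forall_dec (forall_dec F_ok x) y) z).
rewrite /F; case: (x == y); first exact: P_id.
case: (y == c); first exact: P_hub.
exact: P_comp (P_comp (P_hub x) (P_hub y)) (P_hub x).
Qed.

Lemma P_perm (g : {perm vertex}) : P g.
Proof.
have [ts -> _] := prod_tpermP g.
elim: ts => [|a ts IH].
  by rewrite big_nil; apply: P_ext P_id => z; rewrite perm1.
rewrite big_cons; apply: P_ext (P_comp (P_tperm a.1 a.2) IH) => z.
by rewrite permM.
Qed.

Theorem proposition3 (s t : robot -> vertex) :
  is_state s -> is_state t -> reachable s t.
Proof.
move=> ss [ti ti1 ti2]; case: (ss) => si si1 si2.
have ginj : injective (fun v => t (si v)).
  move=> u v e; rewrite -(si2 u) -(si2 v); congr s.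
  by rewrite -(ti1 (si u)) e ti1.
have := P_perm (perm ginj) ss.
have -> : (fun r => perm ginj (s r)) = t.
  by apply: functional_extensionality => r; rewrite permE si1.
done.
Qed.
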